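(* Let $M$ be an abelian group and $\mathcal{A}=\bigoplus_{\chi\in M}\mathcal{A}^\chi$ a finite-dimensional commutative unital $M$-graded $\mathbb{C}$-algebra (so $\mathcal{A}^\chi\mathcal{A}^\psi\subseteq\mathcal{A}^{\chi+\psi}$). Suppose there exist an integer $d>0$ and $\chi\in M$ with $\dim\mathcal{A}^\chi>\dim\mathcal{A}^{d\chi}$. Then there exists $\varepsilon\in\mathcal{A}\setminus\{0\}$ with $\varepsilon^d=0$. *)

(* Defs.v *)
From HB Require Import structures.
From mathcomp Require Import all_boot all_order all_algebra all_field.
From mathcomp Require Import complex.
From mathcomp Require Import Rstruct.
From Stdlib Require Import Reals.

Set Implicit Arguments.
Unset Strict Implicit.
Unset Printing Implicit Defensive.

Import GRing.Theory.
Local Open Scope ring_scope.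

Definition CC : fieldType := (Rdefinitions.R)[i].

(* An M-grading of a finite-dimensional algebra A (over a field F) by a family
   of subspaces Ag : M -> {vspace A}:
   (1) A is the (internal) direct sum of the Ag χ:
       - independence: for every finite family of distinct degrees, homogeneous
         elements summing to 0 are all 0;
       - spanning: A is spanned by finitely many of the Ag χ;
   (2) multiplicativity: Ag χ * Ag ψ ⊆ Ag (χ + ψ). *)
Definition graded_by (F : fieldType) (A : falgType F) (M : zmodType)
    (Ag : M -> {vspace A}) : Prop :=
  [/\ (forall (s : seq M) (v : M -> A), uniq s ->
         (forall chi, v chi \in Ag chi) ->
         \sum_(chi <- s) v chi = 0 ->
         forall chi, chi \in s -> v chi = 0),
      (exists s : seq M, (\sum_(chi <- s) Ag chi)%VS = fullv) &
      (forall (chi psi : M) (x y : A), x \in Ag chi -> y \in Ag psi ->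
         x * y \in Ag (chi + psi))].

(* Main.v *)
Require Import Defs.
From HB Require Import structures.
From mathcomp Require Import all_boot all_order all_algebra all_field.
From Stdlib Require Import Classical.

Local Open Scope ring_scope.
Import GRing.Theory.

Lemma amulrE' (F : fieldType) (A : falgType F) (u v : A) : amulr u v = v * u.
Proof. by rewrite lfunE. Qed.

Theorem lemma2p1 (M : zmodType) (A : falgType CC) (Ag : M -> {vspace A}) :
  (forall x y : A, x * y = y * x) ->
  graded_by Ag ->
  forall (d : nat) (chi : M), (0 < d)%N ->
  (\dim (Ag (chi *+ d)) < \dim (Ag chi))%N ->
  exists eps : A, eps != 0 /\ eps ^+ d = 0.
Proof.
move=> Hc [_ _ Hmul] d chi d0 Hdim.
case: (classic (exists eps : A, eps != 0 /\ eps ^+ d = 0)) => // Hno; exfalso.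
have redd : forall e : A, e ^+ d = 0 -> e = 0.
  move=> e He; case: (eqVneq e 0) => // ne; case: Hno; by exists e.
case: d d0 Hdim redd {Hno} => [//|[|d']] _ Hdim redd.
  by rewrite mulr1n ltnn in Hdim.
have red2 : forall e : A, e ^+ 2 = 0 -> e = 0.
  move=> e He; apply: redd; by rewrite -addn2 exprD He mulr0.
have step : forall u, u \in Ag chi ->
   (lker (amulr u) :&: Ag chi == 0)%VS \/
   exists2 u', u' \in Ag chi & (\dim (lker (amulr u')) < \dim (lker (amulr u)))%N.
  move=> u Hu; case: (boolP (lker (amulr u) :&: Ag chi == 0)%VS) => H; [by left|right].
  set x := vpick (lker (amulr u) :&: Ag chi).
  have xnz : x != 0 by rewrite vpick0.
  have /memv_capP [xk xA] : x \in (lker (amulr u) :&: Ag chi)%VS by apply: memv_pick.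
  have xu : x * u = 0 by move: xk; rewrite memv_ker amulrE' => /eqP.
  exists (u + x)%R; first by rewrite rpredD.
  have sub : (lker (amulr (u + x)%R) <= lker (amulr u))%VS.
    apply/subvP => y; rewrite !memv_ker !amulrE' => /eqP Hy; apply/eqP.
    apply: red2; rewrite expr2.
    have e1 : y * u = - (y * x) by apply/eqP; rewrite -addr_eq0 -mulrDr Hy.
    have : y * u * u = 0 by rewrite e1 mulNr -mulrA xu mulr0 oppr0.
    by move=> e2; rewrite -mulrA (Hc u (y * u)) e2 mulr0.
  rewrite ltn_neqAle (dimvS sub) andbT.
  apply/negP => /eqP E0.
  have E : lker (amulr (u + x)%R) = lker (amulr u).
    by apply/eqP; rewrite -(dimv_leqif_eq sub) E0.
  move: xk; rewrite -E memv_ker amulrE' mulrDr xu add0r.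
  move/eqP => xx; have x0 : x = 0 by apply: red2; rewrite expr2.
  by move: xnz; rewrite x0 eqxx.
have good : forall n u, u \in Ag chi -> (\dim (lker (amulr u)) <= n)%N ->
    exists2 v, v \in Ag chi & (lker (amulr v) :&: Ag chi == 0)%VS.
  elim=> [|n IH] u Hu Hn; case: (step u Hu) => [H|[u' Hu' Hlt]]; try by exists u.
    by move: (leq_trans Hlt Hn); rewrite ltn0.
  by apply: (IH u' Hu'); rewrite -ltnS (leq_trans Hlt).
have [u Hu Hker] := good _ 0 (mem0v _) (leqnn _).
have powmem : forall k x, x \in Ag chi -> x * u ^+ k \in Ag (chi *+ k.+1).
  elim=> [|k IH] x Hx; first by rewrite expr0 mulr1 mulr1n.
  by rewrite exprSr mulrA mulrSr; apply: Hmul => //; apply: IH.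
pose f := amulr (u ^+ d'.+1).
have Hk : (Ag chi :&: lker f = 0)%VS.
  apply/eqP; rewrite -subv0; apply/subvP => x /memv_capP [xA].
  rewrite memv_ker amulrE' => /eqP Hx.
  have xu0 : x * u = 0.
    apply: redd; rewrite exprMn_comm; last by rewrite /GRing.comm Hc.
    have -> : x ^+ d'.+2 * u ^+ d'.+2 = (x * u ^+ d'.+1) * (x ^+ d'.+1 * u).
      rewrite (exprS x) (exprSr u) -!mulrA; congr (x * _).
      by rewrite mulrA (Hc (x ^+ d'.+1) (u ^+ d'.+1)) -mulrA.
    by rewrite Hx mul0r.
  have : x \in (lker (amulr u) :&: Ag chi)%VS.
    by rewrite memv_cap xA memv_ker amulrE' xu0 eqxx.
  rewrite (eqP Hker) memv0 => /eqP ->; exact: eqxx.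
have Hsub : (f @: Ag chi <= Ag (chi *+ d'.+2))%VS.
  apply/subvP => y /memv_imgP [x Hx ->]; rewrite amulrE'; exact: powmem.
have Hle := dimvS Hsub.
rewrite (limg_dim_eq Hk) in Hle.
by move: (leq_trans Hdim Hle); rewrite ltnn.
Qed.
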